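(* For every $n\ge2$, $$\sum_{w\in\mathfrak B_n}F_{\mathrm{iDes}(w)}[X]=h_{(2,1^{n-2})}[X].$$
   Context: $\mathrm{iDes}(w)=\{i: i+1\text{ appears to the left of } i \text{ in } w\}$ (descent set of $w^{-1}$); $F_S$ is Gessel's fundamental quasisymmetric function of degree $n$; $h_\rho$ is the complete homogeneous symmetric function. Butler permutations $\mathfrak B_N$ ($N\ge2$): for $w\in\mathfrak S_N$ define directed arcs: if $N$ even, $\alpha_1=(w_N,N+1)$, $\alpha_r=(w_{N-2r+2},w_{N-2r+3})$ ($2\le r\le N/2$), $\alpha_{N/2+1}=(0,w_1)$; if $N$ odd, $\alpha_r=(w_{N-2r+1},w_{N-2r+2})$ ($1\le r\le(N-1)/2$), $\alpha_{(N+1)/2}=(0,w_1)$. Arc $(a,b)$ is forward if $a<b$, else reverse; $(a,b)$ is nested by $(c,d)$ if $\min(c,d)<a,b<\max(c,d)$; two arcs cross if exactly one endpoint of one lies strictly between the endpoints of the other. Let $k$ be least with $\alpha_k,\alpha_{k+1}$ non-crossing; if it exists, $w$ is Butler iff ($\alpha_{k+1}$ nested by $\alpha_k$ and $\alpha_k$ reverse) or ($\alpha_{k+1}$ not nested by $\alpha_k$ and $\alpha_k$ forward); otherwise put $k=N/2$ ($N$ even) or $(N-1)/2$ ($N$ odd) and $w$ is Butler iff $\alpha_k$ is reverse. *)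

(* Defs.v *)
From HB Require Import structures.
From mathcomp Require Import all_boot all_order all_algebra all_fingroup.
From mathcomp Require Import mpoly.

Set Implicit Arguments.
Unset Strict Implicit.
Unset Printing Implicit Defensive.

Import GRing.Theory.
Local Open Scope ring_scope.

(* Quasisymmetric / symmetric functions (in countably many variables
   x_1, x_2, ...) are represented through their images in the polynomial
   ring Z[x_0,...,x_(m-1)] for EVERY number m of variables; two such
   formal power series of bounded degree are equal iff all these
   specializations agree. *)

Definition tidx (m n : nat) (t : n.-tuple 'I_m) (p : nat) : nat :=
  nth 0%N [seq val x | x <- t] p.

(* Gessel's fundamental quasisymmetric function F_S of degree n:
   the sum of x_(i_1) ... x_(i_n) over i_1 <= ... <= i_n with
   i_j < i_(j+1) whenever j \in S  (positions j are 1-indexed). *)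
Definition gesselF (m n : nat) (S : pred nat) : {mpoly int[m]} :=
  \sum_(t : n.-tuple 'I_m |
         [forall p : 'I_n, (p.+1 < n)%N ==>
            ((tidx t p <= tidx t p.+1)%N &&
             ((p.+1 \in S) ==> (tidx t p < tidx t p.+1)%N))])
     \prod_(j < n) 'X_(tnth t j).

Definition hcomplete (m k : nat) : {mpoly int[m]} :=
  \sum_(t : k.-tuple 'I_m |
         [forall p : 'I_k, (p.+1 < k)%N ==> (tidx t p <= tidx t p.+1)%N])
     \prod_(j < k) 'X_(tnth t j).

Definition hpart (m : nat) (rho : seq nat) : {mpoly int[m]} :=
  \prod_(k <- rho) hcomplete m k.

Definition word (N : nat) (w : 'S_N) : seq nat := [seq (w i).+1 | i <- enum 'I_N].

(* w_i for 1 <= i <= N *)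
Definition wl (N : nat) (w : 'S_N) (i : nat) : nat := nth 0%N (word w) i.-1.

Definition iDes (N : nat) (w : 'S_N) : pred nat :=
  fun i => [&& (0 < i)%N, (i < N)%N & (index i.+1 (word w) < index i (word w))%N].

Definition arc := (nat * nat)%type.

Definition alpha (N : nat) (w : 'S_N) (r : nat) : arc :=
  if ~~ odd N then
    if r == 1%N then (wl w N, N.+1)
    else if r == N./2.+1 then (0%N, wl w 1)
    else (wl w (N - r.*2 + 2), wl w (N - r.*2 + 3))
  else
    if r == N.+1./2 then (0%N, wl w 1)
    else (wl w (N - r.*2 + 1), wl w (N - r.*2 + 2)).

Definition numarcs (N : nat) : nat := if ~~ odd N then N./2.+1 else N.+1./2.

Definition forward (a : arc) : bool := (a.1 < a.2)%N.
Definition reverse (a : arc) : bool := ~~ forward a.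

Definition strictly_between (x : nat) (a : arc) : bool :=
  (minn a.1 a.2 < x < maxn a.1 a.2)%N.

Definition nested_by (a c : arc) : bool :=
  strictly_between a.1 c && strictly_between a.2 c.

Definition crossing (a b : arc) : bool :=
  strictly_between a.1 b (+) strictly_between a.2 b.

Definition butler (N : nat) (w : 'S_N) : bool :=
  let ks := [seq k <- iota 1 (numarcs N).-1 |
              ~~ crossing (alpha w k) (alpha w k.+1)] in
  match ks with
  | k :: _ =>
      (nested_by (alpha w k.+1) (alpha w k) && reverse (alpha w k))
      || (~~ nested_by (alpha w k.+1) (alpha w k) && forward (alpha w k))
  | [::] =>
      let k := if ~~ odd N then N./2 else N.-1./2 in reverse (alpha w k)
  end.

(* Main.v *)
Require Import Defs.
From HB Require Import structures.
From mathcomp Require Import all_boot all_order all_algebra all_fingroup.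
From mathcomp Require Import mpoly.
From mathcomp Require Import zify ring.

Set Implicit Arguments.
Unset Strict Implicit.
Unset Printing Implicit Defensive.


Section Std.
Variables (n m : nat).
Implicit Types (u : {ffun 'I_n -> 'I_m}) (w : 'S_n) (p q : 'I_n).

Definition ltu u p q : bool := (u p < u q) || ((u p == u q) && (p < q)).

Lemma ltu_irr u p : ltu u p p = false.
Proof. by rewrite /ltu ltnn eqxx ltnn. Qed.

Lemma ltu_trans u p q r : ltu u p q -> ltu u q r -> ltu u p r.
Proof.
rewrite /ltu => /orP[H1|/andP[/eqP E1 H1]] /orP[H2|/andP[/eqP E2 H2]].
- by rewrite (ltn_trans H1 H2).
- by rewrite -E2 H1.
- by rewrite E1 H2.
- by rewrite E1 E2 eqxx (ltn_trans H1 H2) orbT.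
Qed.

Lemma ltu_total u p q : p != q -> ltu u p q || ltu u q p.
Proof.
move=> npq; rewrite /ltu -!val_eqE /=.
have: (p : nat) != q by [].
lia.
Qed.

Lemma ltu_asym u p q : ltu u p q -> ltu u q p = false.
Proof.
move=> H; apply/negP => H'; have := ltu_trans H H'; by rewrite ltu_irr.
Qed.

Definition rank u p : nat := #|[set q | ltu u q p]|.

Lemma rank_lt u p : rank u p < n.
Proof.
rewrite /rank.
have: [set q | ltu u q p] \proper [set: 'I_n].
  apply/properP; split; first exact: subsetT.
  by exists p; rewrite ?inE ?ltu_irr.
by move/proper_card; rewrite cardsT card_ord.
Qed.

Lemma rank_mono u p q : ltu u p q -> rank u p < rank u q.
Proof.
move=> H; apply: proper_card; apply/properP; split.
  apply/subsetP => r; rewrite !inE => H'; exact: ltu_trans H' H.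
by exists p; rewrite !inE ?ltu_irr.
Qed.

Definition rankO u p : 'I_n := Ordinal (rank_lt u p).

Lemma rankO_inj u : injective (rankO u).
Proof.
move=> p q /(congr1 val) /= E; apply/eqP; apply/negPn/negP => npq.
case/orP: (ltu_total u npq) => /rank_mono; by rewrite E ltnn.
Qed.

Definition std u : 'S_n := perm (@rankO_inj u).

Definition cmp w u := forall p q, (w p < w q) = ltu u p q.

Lemma std_cmp u : cmp (std u) u.
Proof.
move=> p q; rewrite !permE /=.
case H: (ltu u p q); first by rewrite rank_mono.
case: (eqVneq p q) => [->|npq]; first by rewrite ltnn.
have: ltu u q p by move: (ltu_total u npq); rewrite H.
by move/rank_mono/ltnW; rewrite leqNgt => /negbTE.
Qed.

Lemma card_ord_lt k : k <= n -> #|[set v : 'I_n | v < k]| = k.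
Proof.
move=> kn.
have ->: [set v : 'I_n | v < k] = [set widen_ord kn i | i : 'I_k].
  apply/setP => v; rewrite inE; apply/idP/imsetP.
    by move=> H; exists (Ordinal H) => //; apply: val_inj.
  by case=> i _ ->; rewrite /= ltn_ord.
rewrite card_imset ?card_ord //; by move=> i j /(congr1 val) /= /val_inj.
Qed.

Lemma perm_rank w p : #|[set q | w q < w p]| = w p.
Proof.
have ->: [set q | w q < w p] = (w^-1)%g @: [set v : 'I_n | v < w p].
  apply/setP => q; apply/idP/imsetP.
    by rewrite inE => H; exists (w q); rewrite ?inE ?permK.
  by case=> v; rewrite !inE => H ->; rewrite permKV.
rewrite card_imset; last exact: perm_inj.
exact/card_ord_lt/ltnW.
Qed.

Lemma cmp_uniq w u : cmp w u -> w = std u.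
Proof.
move=> H; apply/permP => p; apply: val_inj.
change (nat_of_ord (w p) = nat_of_ord (std u p)).
rewrite -perm_rank -[RHS]perm_rank; apply: eq_card => q.
by rewrite !inE H std_cmp.
Qed.

End Std.


Section StepA.
Variables (n m : nat).
Implicit Types (u : {ffun 'I_n -> 'I_m}) (w : 'S_n) (p q : 'I_n).

Definition htup w u : n.-tuple 'I_m := [tuple u ((w^-1)%g j) | j < n].

Lemma tidx_h w u k (H : k < n) : tidx (htup w u) k = u ((w^-1)%g (Ordinal H)).
Proof.
rewrite /tidx (nth_map (u ((w^-1)%g (Ordinal H)))) ?size_tuple //.
by rewrite -[k]/(nat_of_ord (Ordinal H)) -tnth_nth tnth_mktuple.
Qed.

Lemma index_word w (v : 'I_n) : index (v : nat).+1 (word w) = (w^-1)%g v.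
Proof.
have -> : (v : nat).+1 = (fun i => (w i).+1) ((w^-1)%g v) by rewrite permKV.
rewrite /word index_map ?index_enum_ord //.
by move=> i j [] /val_inj /perm_inj.
Qed.

Definition gcond w (t : n.-tuple 'I_m) : bool :=
  [forall p : 'I_n, (p.+1 < n) ==>
            ((tidx t p <= tidx t p.+1) &&
             ((p.+1 \in iDes w) ==> (tidx t p < tidx t p.+1)))].

Lemma iDes_ord w p (H : p.+1 < n) :
  (p.+1 \in iDes w) = ((w^-1)%g (Ordinal H) < (w^-1)%g p).
Proof.
rewrite unfold_in /iDes /= H.
by rewrite -[p.+2]/((Ordinal H : nat).+1) !index_word.
Qed.

Lemma gcond_iff w u : gcond w (htup w u) = (std u == w).
Proof.
apply/idP/idP.
- move/forallP => A.
  have cons : forall (p : 'I_n) (H : p.+1 < n),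
      ltu u ((w^-1)%g p) ((w^-1)%g (Ordinal H)).
    move=> p H; move: (A p); rewrite H /= (tidx_h w u (ltn_ord p)).
    rewrite (tidx_h w u H) iDes_ord.
    have -> : Ordinal (ltn_ord p) = p by apply: val_inj.
    have D : ((w^-1)%g p : nat) != (w^-1)%g (Ordinal H).
      by apply/eqP => /val_inj /perm_inj /(congr1 val) /=; lia.
    move: D; rewrite /ltu -val_eqE /=; lia.
  have chain : forall k (a b : 'I_n), (b : nat) = a + k.+1 ->
      ltu u ((w^-1)%g a) ((w^-1)%g b).
    elim=> [|k IH] a b Hb.
      have H : a.+1 < n by move: (ltn_ord b); rewrite Hb; lia.
      have -> : b = Ordinal H by apply: val_inj; rewrite /= Hb; lia.
      exact: cons.
    have Hc : a + k.+1 < n by move: (ltn_ord b); rewrite Hb; lia.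
    apply: (ltu_trans (IH a (Ordinal Hc) erefl)).
    have H : (Ordinal Hc).+1 < n by move: (ltn_ord b); rewrite Hb /=; lia.
    have -> : b = Ordinal H by apply: val_inj; rewrite /= Hb; lia.
    exact: cons.
  have C : cmp w u.
    move=> p q; case: (ltngtP (w p) (w q)) => H.
    + symmetry; have := chain (w q - w p).-1 (w p) (w q); rewrite !permK; apply; lia.
    + apply/esym/negbTE; apply/negP => /ltu_asym.
      have := chain (w p - w q).-1 (w q) (w p); rewrite !permK => ->; first by [].
      lia.
    + have -> : p = q by apply: (@perm_inj _ w); apply: val_inj.
      by rewrite ltu_irr.
  by rewrite (cmp_uniq C).
- move/eqP => E; have C := std_cmp u; rewrite E in C.
  apply/forallP => p; apply/implyP => H.
  rewrite (tidx_h w u (ltn_ord p)) (tidx_h w u H) iDes_ord.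
  have -> : Ordinal (ltn_ord p) = p by apply: val_inj.
  have := C ((w^-1)%g p) ((w^-1)%g (Ordinal H)); rewrite !permKV /= ltnSn.
  rewrite /ltu -val_eqE /= => /esym; lia.
Qed.

Definition mon u : {mpoly int[m]} := \prod_(j < n) 'X_(u j).

Lemma stepA (P : pred 'S_n) :
  (\sum_(w | P w) gesselF m n (iDes w) =
   \sum_(u : {ffun 'I_n -> 'I_m} | P (std u)) mon u)%R.
Proof.
rewrite (partition_big (@std n m) P) //=.
apply: eq_bigr => w Pw; rewrite /gesselF.
rewrite (reindex_onto (htup w) (fun t => [ffun p => tnth t (w p)])); last first.
  move=> t _; apply: eq_from_tnth => j.
  by rewrite tnth_mktuple ffunE permKV.
apply: eq_big => [u|u _].
  have -> : [ffun p => tnth (htup w u) (w p)] == u.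
    by apply/eqP/ffunP => p; rewrite ffunE tnth_mktuple permK.
  rewrite andbT.
  change (gcond w (htup w u) = P (std u) && (std u == w)); rewrite gcond_iff.
  by case: eqP => [->|_]; rewrite ?Pw ?andbF.
rewrite /mon [RHS](reindex_inj (@perm_inj _ (w^-1)%g)) /=.
by apply: eq_bigr => j _; rewrite tnth_mktuple.
Qed.

End StepA.


Section Arcs.
Variable N : nat.
Implicit Types (g : nat -> nat) (a b : nat * nat).

Definition alphaG g r : nat * nat :=
  if ~~ odd N then
    if r == 1%N then (g N, N.+1)
    else if r == N./2.+1 then (0%N, g 1%N)
    else (g (N - r.*2 + 2), g (N - r.*2 + 3))
  else
    if r == N.+1./2 then (0%N, g 1%N)
    else (g (N - r.*2 + 1), g (N - r.*2 + 2)).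

Definition ksG g := [seq k <- iota 1 (numarcs N).-1 |
              ~~ crossing (alphaG g k) (alphaG g k.+1)].
Definition KK := if ~~ odd N then N./2 else N.-1./2.
Definition fdec a b := (nested_by b a && reverse a) || (~~ nested_by b a && forward a).
Definition butlerG g :=
  match ksG g with
  | k :: _ => fdec (alphaG g k) (alphaG g k.+1)
  | [::] => reverse (alphaG g KK)
  end.
Definition dk g := head KK (ksG g).

Definition sw a : nat * nat := (a.2, a.1).

Lemma sb_sw x a : strictly_between x (sw a) = strictly_between x a.
Proof. by rewrite /strictly_between /= minnC maxnC. Qed.

Lemma crossing_swl a b : crossing (sw a) b = crossing a b.
Proof. by rewrite /crossing /= addbC. Qed.
Lemma crossing_swr a b : crossing a (sw b) = crossing a b.
Proof. by rewrite /crossing !sb_sw. Qed.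
Lemma nested_swl a b : nested_by (sw a) b = nested_by a b.
Proof. by rewrite /nested_by /= andbC. Qed.
Lemma nested_swr a b : nested_by a (sw b) = nested_by a b.
Proof. by rewrite /nested_by !sb_sw. Qed.
Lemma forward_sw a : a.1 != a.2 -> forward (sw a) = ~~ forward a.
Proof. rewrite /forward /=; lia. Qed.
Lemma fdec_sw a b : a.1 != a.2 -> fdec (sw a) b = ~~ fdec a b.
Proof.
move=> H; rewrite /fdec nested_swr /reverse forward_sw //.
by case: (nested_by b a); case: (forward a).
Qed.

Lemma KK_numarcs : KK = (numarcs N).-1.
Proof. rewrite /KK /numarcs; case: (odd N) (odd_double_half N) => /=; lia. Qed.

Lemma filter_iota_head (P : pred nat) (a L k : nat) (s : seq nat) :
  [seq x <- iota a L | P x] = k :: s -> forall j, a <= j < k -> ~~ P j.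
Proof.
elim: L a => [|L IH] a //=.
case: ifP => Pa.
  by move=> [<- _] j; lia.
move=> /IH H j Hj; case: (eqVneq j a) => [->|ja]; first by rewrite Pa.
apply: H; lia.
Qed.

Lemma dk_range g : 2 <= N -> 1 <= dk g <= (numarcs N).-1.
Proof.
move=> N2; rewrite /dk; case E: (ksG g) => [|k s] /=.
  rewrite KK_numarcs; move: N2; rewrite /numarcs; case: (odd N) (odd_double_half N) => /=; lia.
have : k \in ksG g by rewrite E mem_head.
by rewrite mem_filter mem_iota => /andP[_]; lia.
Qed.

Lemma dk_prev g k : 2 <= N -> dk g = k -> 2 <= k ->
  crossing (alphaG g k.-1) (alphaG g k).
Proof.
move=> N2 Hk k2; have := dk_range g N2; rewrite Hk => Hr.
have Hmem : k.-1 \in iota 1 (numarcs N).-1 by rewrite mem_iota; lia.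
move: Hk; rewrite /dk; case E: (ksG g) => [|k0 s] /= Hk.
  have : k.-1 \notin ksG g by rewrite E.
  by rewrite mem_filter Hmem andbT negbK prednK //; lia.
have := filter_iota_head E (j := k.-1); rewrite Hk negbK prednK; last lia.
apply; lia.
Qed.

Lemma flip g g' k : 2 <= N -> dk g = k ->
  (forall r, 1 <= r <= numarcs N ->
     alphaG g' r = if r == k then sw (alphaG g r) else alphaG g r) ->
  (alphaG g k).1 != (alphaG g k).2 ->
  ksG g' = ksG g /\ butlerG g' = ~~ butlerG g.
Proof.
move=> N2 Hk Hs Hd.
have Eks : ksG g' = ksG g.
  apply: eq_in_filter => j; rewrite mem_iota => Hj.
  rewrite !Hs; try lia.
  by case: (j == k); case: (j.+1 == k); rewrite ?crossing_swl ?crossing_swr.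
split=> //; rewrite /butlerG Eks.
have := dk_range g N2; rewrite Hk => Hr.
move: Hk; rewrite /dk; case E: (ksG g) => [|k0 s] /= Hk.
  rewrite Hs ?Hk ?eqxx /reverse ?forward_sw // -?Hk //; lia.
subst k; rewrite !Hs ?eqxx; try lia.
by rewrite (_ : (k0.+1 == k0) = false) ?fdec_sw //; lia.
Qed.

Definition genu k := if ~~ odd N then (2 <= k <= N./2) else (1 <= k <= N.-1./2).
Definition posl k := if ~~ odd N then N - k.*2 + 2 else N - k.*2 + 1.
Definition swapn i x := if x == i then i.+1 else if x == i.+1 then i else x.

Lemma genu_dk g : 2 <= N -> (odd N || (2 <= dk g)) -> genu (dk g).
Proof.
move=> N2 H; have := dk_range g N2; move: H; rewrite /genu /numarcs.
case: (odd N) (odd_double_half N) => /=; lia.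
Qed.

Ltac splitifs :=
  repeat (match goal with |- context[if ?b then _ else _] =>
            let H := fresh "H" in case: (boolP b) => H end).

Lemma alpha_pos g k : genu k -> alphaG g k = (g (posl k), g (posl k).+1).
Proof.
rewrite /genu /alphaG /posl; case: (odd N) (odd_double_half N) => /= HN Hk;
splitifs; try (exfalso; lia); repeat f_equal; lia.
Qed.

Lemma alpha_swap g k : genu k -> forall r, 1 <= r <= numarcs N ->
  alphaG (fun x => g (swapn (posl k) x)) r =
  if r == k then sw (alphaG g r) else alphaG g r.
Proof.
rewrite /genu /alphaG /posl /numarcs /swapn /sw;
case: (odd N) (odd_double_half N) => /= HN Hk r Hr;
splitifs => /=; try (exfalso; lia); repeat f_equal; lia.
Qed.

End Arcs.

Lemma butlerE n (w : 'S_n) : butler w = butlerG n (wl w).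
Proof. by []. Qed.


Ltac splitifs :=
  repeat (match goal with |- context[if ?b then _ else _] =>
            let H := fresh "H" in case: (boolP b) => H end).

Lemma swapn_cases (q x : nat) :
  (swapn q x = q.+1 /\ x = q) \/ (swapn q x = q /\ x = q.+1) \/
  (swapn q x = x /\ x <> q /\ x <> q.+1).
Proof.
rewrite /swapn; case: (eqVneq x q) => [->|H1]; first by left.
case: (eqVneq x q.+1) => [->|H2]; first by right; left.
right; right; split => //; split; apply/eqP => //.
Qed.

Ltac dsw q x := let H := fresh "Hs" in let H' := fresh "Hs" in
  case: (swapn_cases q x) => [[-> H]|[[-> H]|[-> [H H']]]].

Section Words.
Variables (n m : nat).
Implicit Types (u : {ffun 'I_n -> 'I_m}) (w : 'S_n) (p q : 'I_n).

Definition wn w (y : nat) := nth 0 (word w) y.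

Lemma wn_ord w p : wn w p = (w p).+1.
Proof.
by rewrite /wn /word (nth_map p) ?size_enum_ord ?ltn_ord // nth_ord_enum.
Qed.

Lemma wn_big w y : n <= y -> wn w y = 0.
Proof. by move=> H; rewrite /wn nth_default // size_map size_enum_ord. Qed.

Lemma wlE w x : wl w x = wn w x.-1.
Proof. by []. Qed.

Lemma wl_ord w p : wl w p.+1 = (w p).+1.
Proof. by rewrite wlE wn_ord. Qed.

Lemma wn_inj w y z : y < n -> z < n -> wn w y = wn w z -> y = z.
Proof.
move=> Hy Hz; rewrite -[y]/(nat_of_ord (Ordinal Hy)) -[z]/(nat_of_ord (Ordinal Hz)).
by rewrite !wn_ord => [[/val_inj /perm_inj ->]].
Qed.

Lemma wn_pos w y : y < n -> 0 < wn w y.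
Proof. by move=> Hy; rewrite -[y]/(nat_of_ord (Ordinal Hy)) wn_ord. Qed.

Lemma wn_le w y : wn w y <= n.
Proof.
case: (ltnP y n) => Hy; last by rewrite wn_big.
by rewrite -[y]/(nat_of_ord (Ordinal Hy)) wn_ord ltn_ord.
Qed.

Definition swO (q : nat) p : 'I_n := insubd p (swapn q p).

Lemma val_swO (q : nat) p : val (swO q p) = if q.+1 < n then swapn q p else p.
Proof.
rewrite /swO val_insubd; have := ltn_ord p.
dsw q (nat_of_ord p); splitifs => //=; lia.
Qed.

Lemma swO_inv (q : nat) : involutive (swO q).
Proof.
move=> p; apply: val_inj; case: (ltnP q.+1 n) => Hq; rewrite !val_swO ?Hq;
  last by rewrite ltnNge Hq.
dsw q (nat_of_ord p); rewrite /swapn; splitifs => //=; lia.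
Qed.

Definition spw (q : nat) : 'S_n := perm (inv_inj (swO_inv q)).

Lemma spwE (q : nat) p : spw q p = swO q p.
Proof. by rewrite permE. Qed.

Lemma wn_spw w (q y : nat) : q.+1 < n -> wn (spw q * w)%g y = wn w (swapn q y).
Proof.
move=> Hq; case: (ltnP y n) => Hy.
  rewrite -[y]/(nat_of_ord (Ordinal Hy)) wn_ord permM spwE /=.
  by rewrite -wn_ord val_swO Hq.
rewrite !wn_big //; dsw q y; lia.
Qed.

Lemma wl_spw w (q x : nat) : 1 <= q -> q.+1 < n ->
  wl (spw q * w)%g x = wl w (swapn q.+1 x).
Proof.
move=> H1 Hq; rewrite !wlE wn_spw //; congr wn.
dsw q.+1 x; dsw q x.-1; lia.
Qed.

Definition ua u (k : nat) : nat := oapp (fun p : 'I_n => val (u p)) 0 (insub k).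

Lemma ua_ord u p : ua u p = u p.
Proof. by rewrite /ua valK. Qed.

Definition uswap (q : nat) u : {ffun 'I_n -> 'I_m} := [ffun p => u (swO q p)].

Lemma std_swap u (q : nat) : q.+1 < n -> ua u q != ua u q.+1 ->
  std (uswap q u) = (spw q * std u)%g.
Proof.
move=> Hq Hd; apply/esym/cmp_uniq => p p'.
rewrite !permM !spwE std_cmp /ltu !ffunE.
case: (eqVneq (u (swO q p)) (u (swO q p'))) => E /=; rewrite ?orbF //.
rewrite E ltnn /=.
have Hv := val_swO q p; have Hv' := val_swO q p'; rewrite Hq in Hv Hv'.
have En : ua u (val (swO q p)) = ua u (val (swO q p')) by rewrite !ua_ord E.
rewrite Hv Hv' in En.
have S1 : swapn q q = q.+1 by rewrite /swapn eqxx.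
have S2 : swapn q q.+1 = q by rewrite /swapn (_ : (q.+1 == q) = false) ?eqxx //; lia.
have : ~~ (((p : nat) == q) && ((p' : nat) == q.+1)) /\
       ~~ (((p : nat) == q.+1) && ((p' : nat) == q)).
  split; apply/negP => /andP[/eqP a /eqP b]; move: En Hd; rewrite a b S1 S2 => ->;
  by rewrite eqxx.
move=> X.
rewrite Hv Hv'; move: X; dsw q (nat_of_ord p); dsw q (nat_of_ord p'); lia.
Qed.

End Words.


Lemma alphaG_ext N g g' r : g =1 g' -> alphaG N g r = alphaG N g' r.
Proof. by move=> E; rewrite /alphaG !E. Qed.

Lemma crossing_tie b x : crossing b (x, x.+1) = false.
Proof. rewrite /crossing /strictly_between /=; lia. Qed.

Lemma posl_props N k : genu N k -> 2 <= posl N k /\ (posl N k).+1 <= N.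
Proof. rewrite /genu /posl; case: (odd N) (odd_double_half N) => /=; lia. Qed.

Section Invol.
Variables (n m : nat).
Hypothesis n2 : 2 <= n.
Implicit Types (u : {ffun 'I_n -> 'I_m}) (w : 'S_n) (p q : 'I_n).

Definition Kd u := dk n (wl (std u)).
Definition qp u := (posl n (Kd u)).-1.
Definition movable u := genu n (Kd u) && (ua u (qp u) != ua u (qp u).+1).
Definition iot u := if movable u then uswap (qp u) u else u.

Lemma ua_uswap u (q x : nat) : q.+1 < n -> ua (uswap q u) x = ua u (swapn q x).
Proof.
move=> Hq; case: (ltnP x n) => Hx.
  rewrite -[x]/(nat_of_ord (Ordinal Hx)) ua_ord ffunE -ua_ord val_swO Hq //.
dsw q x; try lia.
by rewrite /ua !insubF // ltnNge Hx.
Qed.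

Lemma tie u (q : nat) : q.+1 < n -> ua u q = ua u q.+1 ->
  wn (std u) q.+1 = (wn (std u) q).+1.
Proof.
move=> Hq E.
have Hq0 : q < n by lia.
set p := Ordinal Hq0; set p' := Ordinal Hq.
rewrite -[q]/(nat_of_ord p) -[q.+1]/(nat_of_ord p') !wn_ord; congr S.
have C := std_cmp u.
move: E; rewrite -[q]/(nat_of_ord p) -[q.+1]/(nat_of_ord p') !ua_ord => E.
have L : std u p < std u p'.
  rewrite C /ltu -val_eqE /=; move: E; lia.
apply/eqP; rewrite eqn_leq L andbT leqNgt; apply/negP => L2.
have Hv : (std u p).+1 < n by move: (ltn_ord (std u p')); lia.
set r := ((std u)^-1)%g (Ordinal Hv).
have Er : std u r = Ordinal Hv by rewrite permKV.
have H1 : ltu u p r by rewrite -C Er /=.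
have H2 : ltu u r p' by rewrite -C Er /=.
move: H1 H2; rewrite /ltu -!val_eqE /= E; lia.
Qed.

Lemma alpha_k_vals u : genu n (Kd u) ->
  alphaG n (wl (std u)) (Kd u) = (wn (std u) (qp u), wn (std u) (qp u).+1).
Proof.
move=> G; have [P1 P2] := posl_props G.
rewrite alpha_pos // !wlE /qp; congr (_, _); congr wn; lia.
Qed.

Lemma mov_k2 u : genu n (Kd u) -> 2 <= Kd u -> ua u (qp u) != ua u (qp u).+1.
Proof.
move=> G K2; have [P1 P2] := posl_props G.
have := dk_prev n2 (erefl (Kd u)) K2; rewrite -/(Kd u) alpha_k_vals //.
apply: contraTneq => E; rewrite tie ?crossing_tie //; rewrite /qp; lia.
Qed.

Lemma iot_mov u : movable u ->
  [/\ movable (iot u), Kd (iot u) = Kd u,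
      butler (std (iot u)) = ~~ butler (std u) & iot (iot u) = u].
Proof.
move=> Mu; have /andP[G D] := Mu.
have [P1 P2] := posl_props G.
set q := qp u.
have Hq : q.+1 < n by rewrite /q /qp; lia.
have Hq1 : 1 <= q by rewrite /q /qp; lia.
have Hi : uswap q u = iot u by rewrite /iot Mu.
have Hstd : std (iot u) = (spw n q * std u)%g by rewrite -Hi std_swap.
have Hg : forall x, wl (std (iot u)) x = wl (std u) (swapn (posl n (Kd u)) x).
  by move=> x; rewrite Hstd wl_spw // /q /qp prednK //; lia.
have [Eks Eb] : ksG n (wl (std (iot u))) = ksG n (wl (std u)) /\
                butlerG n (wl (std (iot u))) = ~~ butlerG n (wl (std u)).
  apply: (flip n2 (erefl (Kd u))).
    move=> r Hr; rewrite (alphaG_ext _ _ Hg); exact: alpha_swap.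
  rewrite alpha_k_vals //=; apply: contra D => /eqP /wn_inj E.
  by move: (E ltac:(lia) Hq); lia.
have EK : Kd (iot u) = Kd u by rewrite /Kd /dk Eks.
have Eq : qp (iot u) = q by rewrite /qp EK.
have Mi : movable (iot u).
  rewrite /movable EK G Eq -Hi !ua_uswap //.
  have -> : swapn q q = q.+1 by rewrite /swapn eqxx.
  have -> : swapn q q.+1 = q by rewrite /swapn (_ : (q.+1 == q) = false) ?eqxx //; lia.
  by rewrite eq_sym.
split => //.
rewrite {1}/iot Mi Eq -Hi; apply/ffunP => p; rewrite !ffunE.
by rewrite swO_inv.
Qed.

Lemma iot_nmov u : ~~ movable u -> iot u = u.
Proof. by rewrite /iot => /negbTE ->. Qed.

Lemma iot_inv : involutive iot.
Proof.
move=> u; case: (boolP (movable u)) => M; first by case: (iot_mov M) => _ _ _ ->.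
by rewrite !iot_nmov.
Qed.

Lemma iot_movE u : movable (iot u) = movable u.
Proof.
case: (boolP (movable u)) => M; first by case: (iot_mov M).
by rewrite iot_nmov //; apply/negbTE.
Qed.

Lemma mon_iot u : mon (iot u) = mon u.
Proof.
rewrite /iot; case: ifP => // _; rewrite /mon.
rewrite [RHS](reindex_inj (inv_inj (swO_inv (qp u)))) /=.
by apply: eq_bigr => j _; rewrite ffunE.
Qed.

End Invol.

Import GRing.Theory Num.Theory.
Local Open Scope ring_scope.



Lemma twice0 m (x : {mpoly int[m]}) : x *+ 2 = 0 -> x = 0.
Proof.
move=> H; apply/mpolyP => mm; have := congr1 (mcoeff mm) H.
rewrite mcoeffMn mcoeff0 => /eqP; rewrite mulrn_eq0 /= => /eqP ->.
done.
Qed.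

Lemma twice_inj m (x y : {mpoly int[m]}) : x *+ 2 = y *+ 2 -> x = y.
Proof.
move=> H; apply/eqP; rewrite -subr_eq0; apply/eqP/twice0.
by rewrite mulrnBl H subrr.
Qed.

Section Sums.
Variables (n m : nat).
Hypothesis n2 : (2 <= n)%N.
Implicit Types (u : {ffun 'I_n -> 'I_m}).

Definition sgnW u : {mpoly int[m]} := if butler (std u) then mon u else - mon u.

Lemma sum_mov0 : \sum_(u | movable u) sgnW u = 0.
Proof.
apply: twice0; rewrite mulr2n; apply/eqP; rewrite addr_eq0; apply/eqP.
rewrite {1}(reindex_inj (inv_inj (iot_inv n2))) /= -sumrN.
apply: eq_big => u; first by rewrite (iot_movE n2).
move=> M; rewrite (iot_movE n2) in M; have [_ _ Hb _] := iot_mov n2 M.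
by rewrite /sgnW Hb mon_iot; case: (butler (std u)); rewrite ?opprK.
Qed.

Lemma key_identity :
  (\sum_(u : {ffun 'I_n -> 'I_m} | butler (std u)) mon u) *+ 2 =
  \sum_(u : {ffun 'I_n -> 'I_m}) mon u + \sum_(u | ~~ movable u) sgnW u.
Proof.
have E1 : \sum_u sgnW u = \sum_(u | ~~ movable u) sgnW u.
  by rewrite (bigID (@movable n m)) /= sum_mov0 add0r.
rewrite -E1 [\sum_u mon u](bigID (fun u => butler (std u))) /=.
rewrite [\sum_u sgnW u](bigID (fun u => butler (std u))) /=.
have -> : \sum_(u : {ffun 'I_n -> 'I_m} | butler (std u)) sgnW u = \sum_(u : {ffun 'I_n -> 'I_m} | butler (std u)) mon u.
  by apply: eq_bigr => u Hb; rewrite /sgnW Hb.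
have -> : \sum_(u : {ffun 'I_n -> 'I_m} | ~~ butler (std u)) sgnW u = - \sum_(u : {ffun 'I_n -> 'I_m} | ~~ butler (std u)) mon u.
  by rewrite -sumrN; apply: eq_bigr => u Hb; rewrite /sgnW (negbTE Hb).
by rewrite mulr2n addrACA subrr addr0.
Qed.

End Sums.

Local Close Scope ring_scope.


Lemma ks_head1 N g : 2 <= N -> ~~ crossing (alphaG N g 1) (alphaG N g 2) ->
  exists s, ksG N g = 1 :: s.
Proof.
move=> N2 H; rewrite /ksG.
have : 1 <= (numarcs N).-1 by rewrite /numarcs; case: (odd N) (odd_double_half N) => /=; lia.
case: (numarcs N).-1 => [//|L] _ /=; rewrite H; by eexists.
Qed.

Lemma cross_tie_l x y z : y != x -> y != x.+1 -> z != x -> z != x.+1 ->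
  crossing (x, x.+1) (y, z) = false.
Proof. rewrite /crossing /strictly_between /=; lia. Qed.

Section Fix.
Variables (n m : nat).
Hypothesis n2 : 2 <= n.
Implicit Types (u : {ffun 'I_n -> 'I_m}).

Lemma wn_wl u j : 1 <= j -> wl (std u) j = wn (std u) j.-1.
Proof. by []. Qed.

Lemma std_lt_ua u (a c : nat) : a < c -> c < n ->
  (wn (std u) a < wn (std u) c) = (ua u a <= ua u c).
Proof.
move=> ac cn; have an : a < n by lia.
rewrite -[a]/(nat_of_ord (Ordinal an)) -[c]/(nat_of_ord (Ordinal cn)) !wn_ord !ua_ord.
rewrite ltnS std_cmp /ltu -val_eqE /=; lia.
Qed.

Lemma std_gt_ua u (a c : nat) : a < c -> c < n ->
  (wn (std u) c < wn (std u) a) = (ua u c < ua u a).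
Proof.
move=> ac cn; have an : a < n by lia.
rewrite -[a]/(nat_of_ord (Ordinal an)) -[c]/(nat_of_ord (Ordinal cn)) !wn_ord !ua_ord.
rewrite ltnS std_cmp /ltu -val_eqE /=; lia.
Qed.

Lemma wn_neq u (a c : nat) : a < n -> c < n -> a != c -> wn (std u) a != wn (std u) c.
Proof. by move=> an cn ac; apply: contra ac => /eqP /wn_inj E; rewrite E. Qed.

Hypothesis nodd : odd n.

Lemma n3 : 3 <= n.
Proof. move: n2 nodd; lia. Qed.

Lemma odd_tie_fix u : ua u (n - 2) = ua u (n - 1) ->
  Kd u = 1 /\ butler (std u).
Proof.
move=> E; have N3 := n3.
set g := wl (std u).
have G1 : genu n 1 by rewrite /genu nodd /=; lia.
set x := wn (std u) (n - 2).
have Tx : wn (std u) (n - 1) = x.+1.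
  have E' : ua u (n - 2) = ua u (n - 2).+1 by rewrite E; congr ua; lia.
  have := @tie n m n2 u (n - 2) ltac:(lia) E'.
  by rewrite (_ : (n - 2).+1 = n - 1) //; lia.
have A1 : alphaG n g 1 = (x, x.+1).
  rewrite alpha_pos // /posl nodd /= /g !wlE -Tx; congr (_, _); congr wn; lia.
have x1 : 0 < x by apply: wn_pos; lia.
have Hend : forall j, 1 <= j <= n - 2 -> (g j != x) && (g j != x.+1).
  move=> j Hj; rewrite /g wlE /x -Tx.
  by rewrite !wn_neq //; lia.
have NC : ~~ crossing (alphaG n g 1) (alphaG n g 2).
  rewrite A1 /alphaG nodd /=; case: ifP => Hc.
    rewrite cross_tie_l //; try lia.
      by case/andP: (Hend 1 ltac:(lia)).
    by case/andP: (Hend 1 ltac:(lia)).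
  have := Hend (n - 4 + 1) ltac:(lia); have := Hend (n - 4 + 2) ltac:(lia).
  move=> /andP[H1 H2] /andP[H3 H4]; by rewrite cross_tie_l.
have [s Es] := ks_head1 n2 NC.
split; first by rewrite /Kd /dk -/g Es.
rewrite butlerE /butlerG -/g Es A1 /fdec /nested_by /strictly_between /forward /=.
apply/orP; right; apply/andP; split; last by [].
lia.
Qed.

Lemma odd_fix_iff u : ~~ movable u = (ua u (n - 2) == ua u (n - 1)).
Proof.
have N3 := n3.
apply/idP/idP.
  rewrite /movable negb_and => /orP[G|].
    by move: G; have := dk_range (wl (std u)) n2; rewrite /genu /numarcs /Kd nodd /=; lia.
  rewrite negbK => /eqP E.
  have G : genu n (Kd u) by move: (dk_range (wl (std u)) n2); rewrite /genu /numarcs /Kd nodd /=; lia.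
  case: (leqP 2 (Kd u)) => K2.
    by have := mov_k2 n2 G K2; rewrite E eqxx.
  have K1 : Kd u = 1 by move: K2 (dk_range (wl (std u)) n2); rewrite /Kd; lia.
  move: E; rewrite /qp K1.
  have -> : (posl n 1).-1 = n - 2 by rewrite /posl nodd /=; lia.
  have -> : (n - 2).+1 = n - 1 by lia.
  by move=> ->.
move=> /eqP E; have [K1 _] := odd_tie_fix E.
rewrite /movable negb_and; apply/orP; right; rewrite negbK /qp K1.
have -> : (posl n 1).-1 = n - 2 by rewrite /posl nodd /=; lia.
have -> : (n - 2).+1 = n - 1 by lia.
by rewrite E.
Qed.

Lemma fix_odd :
  (\sum_(u : {ffun 'I_n -> 'I_m} | ~~ movable u) sgnW u =
   \sum_(u : {ffun 'I_n -> 'I_m} | ua u (n - 2) == ua u (n - 1)) mon u)%R.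
Proof.
apply: eq_big => u; first by rewrite odd_fix_iff.
move=> M; have /eqP E : ua u (n - 2) == ua u (n - 1) by rewrite -odd_fix_iff.
by have [_ B] := odd_tie_fix E; rewrite /sgnW B.
Qed.

End Fix.

Section FixEven.
Variables (n m : nat).
Hypothesis n4 : 4 <= n.
Hypothesis nev : ~~ odd n.
Implicit Types (u : {ffun 'I_n -> 'I_m}).

Lemma n2' : 2 <= n. Proof. lia. Qed.

Definition Ae u := (ua u (n - 3) <= ua u (n - 1)) && (ua u (n - 2) <= ua u (n - 1)).
Definition Be u := (ua u (n - 1) < ua u (n - 3)) && (ua u (n - 1) < ua u (n - 2)).

Lemma even_A12 u :
  alphaG n (wl (std u)) 1 = (wn (std u) (n - 1), n.+1) /\
  alphaG n (wl (std u)) 2 = (wn (std u) (n - 3), wn (std u) (n - 2)).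
Proof.
rewrite /alphaG nev /=; split; first by rewrite wlE; congr (_, _); congr wn; lia.
case: ifP => H; first lia.
rewrite !wlE; congr (_, _); congr wn; lia.
Qed.

Lemma even_fix_iff u :
  ~~ movable u = ~~ crossing (alphaG n (wl (std u)) 1) (alphaG n (wl (std u)) 2).
Proof.
have N2 := n2'.
apply/idP/idP; last first.
  move=> NC; have [s Es] := ks_head1 N2 NC.
  have K1 : Kd u = 1 by rewrite /Kd /dk Es.
  by rewrite /movable K1 /genu nev.
move=> NM; apply/negP => C; move/negP: NM; apply.
have R := dk_range (wl (std u)) N2.
have K2 : 2 <= Kd u.
  move: R; rewrite /Kd /dk; case E: (ksG n (wl (std u))) => [|k0 s] /=.
    by rewrite /KK /numarcs nev /=; lia.
  have : k0 \in ksG n (wl (std u)) by rewrite E mem_head.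
  rewrite mem_filter => /andP[NC _].
  case: (eqVneq k0 1) => [E1|]; last lia.
  by move: NC; rewrite E1 C.
have G : genu n (Kd u) by move: R K2; rewrite /genu /Kd /numarcs nev /=; lia.
by rewrite /movable G mov_k2.
Qed.

Lemma even_pt u :
  [/\ ~~ movable u = Ae u || Be u, ~~ (Ae u && Be u) &
      (~~ movable u -> butler (std u) = Ae u)].
Proof.
have N2 := n2'.
have [A1 A2] := even_A12 u.
have Ex : Ae u = (wn (std u) (n - 3) < wn (std u) (n - 1)) &&
                 (wn (std u) (n - 2) < wn (std u) (n - 1)).
  by rewrite /Ae !std_lt_ua //; lia.
have Ey : Be u = (wn (std u) (n - 1) < wn (std u) (n - 3)) &&
                 (wn (std u) (n - 1) < wn (std u) (n - 2)).
  by rewrite /Be !std_gt_ua //; lia.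
have d1 := wn_neq u (a := n - 3) (c := n - 1) ltac:(lia) ltac:(lia) ltac:(lia).
have d2 := wn_neq u (a := n - 2) (c := n - 1) ltac:(lia) ltac:(lia) ltac:(lia).
have d3 := wn_neq u (a := n - 3) (c := n - 2) ltac:(lia) ltac:(lia) ltac:(lia).
have b1 := wn_le (std u) (n - 3); have b2 := wn_le (std u) (n - 2).
have b3 := wn_le (std u) (n - 1).
rewrite even_fix_iff A1 A2 Ex Ey; split.
- rewrite /crossing /strictly_between /=; lia.
- lia.
- move=> NC; have NC' := NC; rewrite -A1 -A2 in NC'; have [s Es] := ks_head1 N2 NC'.
  rewrite butlerE /butlerG Es A1 A2 /fdec /nested_by /strictly_between /reverse /forward /=.
  move: NC; rewrite /crossing /strictly_between /=; lia.
Qed.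

Lemma fix_even :
  (\sum_(u : {ffun 'I_n -> 'I_m} | ~~ movable u) sgnW u =
   \sum_(u : {ffun 'I_n -> 'I_m} | Ae u) mon u -
   \sum_(u : {ffun 'I_n -> 'I_m} | Be u) mon u)%R.
Proof.
rewrite (bigID Ae) /= -sumrN.
congr (_ + _)%R; apply: eq_big => u.
- have [E _ _] := even_pt u; rewrite E; by case: (Ae u); case: (Be u).
- move=> /andP[NM HA]; have [_ _ B] := even_pt u; by rewrite /sgnW B // HA.
- have [E D _] := even_pt u; rewrite E; move: D; by case: (Ae u); case: (Be u).
- move=> /andP[NM HA]; have [_ _ B] := even_pt u; by rewrite /sgnW B // (negbTE HA).
Qed.

End FixEven.

Lemma butler2 N g : N = 2 -> 1 <= g 1 <= 2 -> 1 <= g 2 <= 2 -> g 1 != g 2 ->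
  butlerG N g = (g 1 < g 2).
Proof.
move=> -> H1 H2 H3.
rewrite /butlerG /ksG /alphaG /numarcs /KK /=.
rewrite /crossing /strictly_between /fdec /nested_by /reverse /forward /=.
case: ifP => /=; lia.
Qed.

Section Fix2.
Variables (n m : nat).
Hypothesis n2e : n = 2.
Implicit Types (u : {ffun 'I_n -> 'I_m}).

Lemma fix2 :
  (\sum_(u : {ffun 'I_n -> 'I_m} | ~~ movable u) sgnW u =
   \sum_(u : {ffun 'I_n -> 'I_m} | (ua u 0 <= ua u 1)%N) mon u -
   \sum_(u : {ffun 'I_n -> 'I_m} | (ua u 1 < ua u 0)%N) mon u)%R.
Proof.
have N2 : 2 <= n by lia.
have NM : forall u, ~~ movable u.
  move=> u; have := dk_range (wl (std u)) N2; rewrite /movable /genu /Kd /numarcs.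
  have -> : odd n = false by rewrite n2e.
  rewrite /=; lia.
have B : forall u, butler (std u) = (ua u 0 <= ua u 1).
  move=> u; rewrite butlerE (@butler2 n) // ?wlE /=.
  - rewrite std_lt_ua //; lia.
  - have := wn_pos (std u) (y := 0) ltac:(lia); have := wn_le (std u) 0; lia.
  - have := wn_pos (std u) (y := 1) ltac:(lia); have := wn_le (std u) 1; lia.
  - apply: wn_neq; lia.
rewrite (eq_bigl predT) // (bigID (fun u => ua u 0 <= ua u 1)) /= -sumrN.
congr (_ + _)%R; apply: eq_big => u //.
- by move=> H; rewrite /sgnW B H.
- by rewrite -ltnNge.
- by move=> H; rewrite /sgnW B; move: H; case: leqP.
Qed.

End Fix2.

Local Open Scope ring_scope.



Section Poly.
Variables (n m : nat).
Implicit Types (u : {ffun 'I_n -> 'I_m}).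

Definition ee : {mpoly int[m]} := \sum_(i < m) 'X_i.
Definition Sle (z : 'I_m) : {mpoly int[m]} := \sum_(i : 'I_m | (i <= z)%N) 'X_i.
Definition Sgt (z : 'I_m) : {mpoly int[m]} := \sum_(i : 'I_m | (z < i)%N) 'X_i.

Lemma sum_prod_cond (P : 'I_n -> pred 'I_m) :
  \sum_(u : {ffun 'I_n -> 'I_m} | [forall j, P j (u j)]) mon u =
  \prod_(j < n) \sum_(i | P j i) 'X_i.
Proof.
rewrite big_mkcond /=.
under [RHS]eq_bigr => j _ do rewrite big_mkcond /=.
rewrite bigA_distr_bigA /=; apply: eq_bigr => u _.
case: (boolP [forall j, P j (u j)]) => H.
  by rewrite /mon; apply: eq_bigr => j _; move/forallP: H => ->.
move/forallPn: H => [j Hj].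
by rewrite (bigD1 j) //= (negbTE Hj) mul0r.
Qed.

Lemma sum_all : \sum_(u : {ffun 'I_n -> 'I_m}) mon u = ee ^+ n.
Proof.
have := sum_prod_cond (fun _ _ => true); rewrite prodr_const card_ord /= => <-.
by apply: eq_bigl => u; apply/esym/forallP.
Qed.

Lemma prod_if1 (a : 'I_n) (x : {mpoly int[m]}) (G : 'I_n -> {mpoly int[m]}) :
  \prod_(j < n) (if j == a then x else G j) = x * \prod_(j | j != a) G j.
Proof.
rewrite (bigD1 a) //= eqxx; congr (_ * _); apply: eq_bigr => j /negbTE ->.
by [].
Qed.

Lemma card_pos2 (a b : 'I_n) : a != b ->
  #|[pred j : 'I_n | (j != a) && (j != b)]| = (n - 2)%N.
Proof.
move=> ab; have := cardsC [set a; b]; rewrite card_ord cards2 ab.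
rewrite (@eq_card _ (~: [set a; b]) [pred j : 'I_n | (j != a) && (j != b)]).
  move=> /= H.
  have H' : (2 + #|[pred j : 'I_n | (j != a) && (j != b)]|)%N = n := H.
  lia.
by move=> j; rewrite !inE negb_or.
Qed.

Lemma card_pos3 (a b c : 'I_n) : a != b -> a != c -> b != c ->
  #|[pred j : 'I_n | (j != a) && (j != b) && (j != c)]| = (n - 3)%N.
Proof.
move=> ab ac bc; have := cardsC (c |: [set a; b]).
rewrite card_ord cardsU1 cards2 ab !inE negb_or eq_sym ac eq_sym bc /=.
rewrite (@eq_card _ (~: (c |: [set a; b])) [pred j : 'I_n | (j != a) && (j != b) && (j != c)]).
  move=> /= H.
  have H' : (3 + #|[pred j : 'I_n | (j != a) && (j != b) && (j != c)]|)%N = n := H.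
  lia.
by move=> j; rewrite !inE !negb_or; case: (j != a); case: (j != b); case: (j != c).
Qed.

Lemma sum_pos2 (a b : 'I_n) (Pa Pb : pred 'I_m) : a != b ->
  \sum_(u : {ffun 'I_n -> 'I_m} | Pa (u a) && Pb (u b)) mon u =
  (\sum_(i | Pa i) 'X_i) * (\sum_(i | Pb i) 'X_i) * ee ^+ (n - 2).
Proof.
move=> ab.
set P := fun j : 'I_n => if j == a then Pa else if j == b then Pb else predT.
have -> : \sum_(u : {ffun 'I_n -> 'I_m} | Pa (u a) && Pb (u b)) mon u =
          \sum_(u : {ffun 'I_n -> 'I_m} | [forall j, P j (u j)]) mon u.
  apply: eq_bigl => u; apply/andP/forallP.
    by case=> H1 H2 j; rewrite /P; case: eqP => [->|_] //; case: eqP => [->|_].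
  move=> H; split; first by have := H a; rewrite /P eqxx.
  by have := H b; rewrite /P eq_sym (negbTE ab) eqxx.
rewrite sum_prod_cond.
rewrite (eq_bigr (fun j => if j == a then \sum_(i | Pa i) 'X_i
           else if j == b then \sum_(i | Pb i) 'X_i else ee)); last first.
  by move=> j _; rewrite /P; case: ifP => //; case: ifP.
rewrite prod_if1 (bigD1 b) 1?eq_sym //= eqxx -mulrA; congr (_ * _).
congr (_ * _); rewrite (eq_bigr (fun _ => ee)); last by move=> j /andP[_ /negbTE ->].
rewrite prodr_const; congr (_ ^+ _).
rewrite -(card_pos2 ab); apply: eq_card => j; rewrite !inE andbC //.
Qed.

Lemma sum_pos3 (a b c : 'I_n) (Pa Pb Pc : pred 'I_m) :
  a != b -> a != c -> b != c ->
  \sum_(u : {ffun 'I_n -> 'I_m} | [&& Pa (u a), Pb (u b) & Pc (u c)]) mon u =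
  (\sum_(i | Pa i) 'X_i) * (\sum_(i | Pb i) 'X_i) * (\sum_(i | Pc i) 'X_i) *
    ee ^+ (n - 3).
Proof.
move=> ab ac bc.
have ba : (b == a) = false by rewrite eq_sym (negbTE ab).
have ca : (c == a) = false by rewrite eq_sym (negbTE ac).
have cb : (c == b) = false by rewrite eq_sym (negbTE bc).
set P := fun j : 'I_n => if j == a then Pa else if j == b then Pb
                         else if j == c then Pc else predT.
have -> : \sum_(u : {ffun 'I_n -> 'I_m} | [&& Pa (u a), Pb (u b) & Pc (u c)]) mon u =
          \sum_(u : {ffun 'I_n -> 'I_m} | [forall j, P j (u j)]) mon u.
  apply: eq_bigl => u; apply/and3P/forallP.
    case=> H1 H2 H3 j; rewrite /P.
    by case: eqP => [->|_] //; case: eqP => [->|_] //; case: eqP => [->|_].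
  move=> H; split; first by have := H a; rewrite /P eqxx.
    by have := H b; rewrite /P ba eqxx.
  by have := H c; rewrite /P ca cb eqxx.
rewrite sum_prod_cond.
rewrite (eq_bigr (fun j => if j == a then \sum_(i | Pa i) 'X_i
           else if j == b then \sum_(i | Pb i) 'X_i
           else if j == c then \sum_(i | Pc i) 'X_i else ee)); last first.
  by move=> j _; rewrite /P; case: ifP => //; case: ifP => //; case: ifP.
rewrite prod_if1 (bigD1 b) 1?eq_sym //= eqxx.
rewrite (bigD1 c) /=; last by rewrite ca cb.
rewrite cb eqxx -!mulrA; congr (_ * (_ * (_ * _))).
rewrite (eq_bigr (fun _ => ee)); last first.
  by move=> j /andP[/andP[_ /negbTE ->] /negbTE ->].
rewrite prodr_const; congr (_ ^+ _).
rewrite -(card_pos3 ab ac bc); apply: eq_card => j; rewrite !inE.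
by case: (j != a); case: (j != b); case: (j != c).
Qed.

End Poly.



Section Final.
Variable m : nat.

Definition Dd : {mpoly int[m]} := \sum_(z : 'I_m) 'X_z * Sle z.
Definition Ee : {mpoly int[m]} := \sum_(z : 'I_m) 'X_z * Sgt z.

Lemma ee_split (z : 'I_m) : ee m = Sle z + Sgt z.
Proof.
rewrite /ee (bigID (fun i : 'I_m => (i <= z)%N)) /=; congr (_ + _).
by apply: eq_bigl => i; rewrite ltnNge.
Qed.

Lemma DE_sum : Dd + Ee = ee m * ee m.
Proof.
rewrite /Dd /Ee -big_split /= {1}/ee mulr_suml; apply: eq_bigr => z _.
by rewrite -mulrDr -ee_split.
Qed.

Lemma DE_diff : Dd - Ee = \sum_(z : 'I_m) 'X_z * 'X_z.
Proof.
rewrite /Dd /Ee /Sle /Sgt.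
under eq_bigr => z _ do rewrite big_mkcond mulr_sumr /=.
under [X in _ - X]eq_bigr => z _ do rewrite big_mkcond mulr_sumr /=.
rewrite [X in _ - X]exchange_big /= -sumrB; apply: eq_bigr => z _.
rewrite -sumrB (bigD1 z) //= big1 ?addr0.
  by rewrite leqnn ltnn mulr0 subr0.
move=> i /negbTE iz; rewrite -val_eqE in iz.
case: (ltngtP i z) => H.
- by rewrite mulrC subrr.
- by rewrite !mulr0 subrr.
- by move/negbT/eqP: iz => /(_ H).
Qed.

Lemma hcomplete1 : hcomplete m 1 = ee m.
Proof.
rewrite /hcomplete (reindex_onto (fun i : 'I_m => [tuple i]) (fun t => thead t)).
  apply: eq_big => [i|i _]; last by rewrite big_ord1.
  apply/andP; split; last by rewrite theadE.
  by apply/forallP => p; case: p => [[|]].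
by move=> t _; apply: eq_from_tnth => j; rewrite (ord1 j) /= [in RHS](tuple_eta t).
Qed.

Lemma hcomplete2 : hcomplete m 2 = Dd.
Proof.
rewrite /hcomplete (reindex_onto (fun p : 'I_m * 'I_m => [tuple p.2; p.1])
                      (fun t => (tnth t 1, tnth t 0))).
  rewrite /Dd /Sle.
  under [RHS]eq_bigr => z _ do rewrite mulr_sumr.
  rewrite pair_big_dep /=; apply: eq_big => [[z i]|[z i] _] /=.
    rewrite (_ : (tnth [tuple i; z] 1, tnth [tuple i; z] 0) == (z, i)) ?andbT; last by apply/eqP. apply/forallP/idP.
      by move=> /(_ ord0) /=.
    move=> H [[|[|k]] Hk] //=.
  by rewrite big_ord_recr big_ord1 /= mulrC.
move=> t _; apply: eq_from_tnth => j.
case: j => [[|[|k]] Hk] //=.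
  by rewrite (tnth_nth (tnth t ord0)) /= (_ : Ordinal Hk = ord0) //; apply: val_inj.
by rewrite (tnth_nth (tnth t ord0)) /= (_ : Ordinal Hk = 1) //; apply: val_inj.
Qed.

Lemma iter_mul (x : {mpoly int[m]}) k : iter k ( *%R x) 1 = x ^+ k.
Proof. by elim: k => [|k IH] //=; rewrite IH exprS. Qed.

Lemma hpart_val n : (2 <= n)%N ->
  hpart m (2%N :: nseq (n - 2) 1%N) = Dd * ee m ^+ (n - 2).
Proof.
move=> _; rewrite /hpart big_cons hcomplete2 big_nseq hcomplete1.
by rewrite iter_mul.
Qed.

End Final.



Section Sig.
Variables (n m : nat).

Lemma sig_odd : (2 <= n)%N ->
  \sum_(u : {ffun 'I_n -> 'I_m} | ua u (n - 2) == ua u (n - 1)) mon u =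
  (Dd m - Ee m) * ee m ^+ (n - 2).
Proof.
move=> n2.
have Ha : (n - 2 < n)%N by lia.
have Hb : (n - 1 < n)%N by lia.
set a := Ordinal Ha; set b := Ordinal Hb.
have ab : a != b by rewrite -val_eqE /=; lia.
rewrite (eq_bigl (fun u : {ffun 'I_n -> 'I_m} => u a == u b)); last first.
  by move=> u; rewrite -[(n - 2)%N]/(nat_of_ord a) -[(n - 1)%N]/(nat_of_ord b) !ua_ord val_eqE.
rewrite (partition_big (fun u : {ffun 'I_n -> 'I_m} => u b) predT) //=.
rewrite DE_diff mulr_suml; apply: eq_bigr => z _.
rewrite (eq_bigl (fun u : {ffun 'I_n -> 'I_m} => pred1 z (u a) && pred1 z (u b))); last first.
  move=> u /=; case: (eqVneq (u b) z) => [->|H] //.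
  by rewrite !andbF.
by rewrite (@sum_pos2 n m a b (pred1 z) (pred1 z) ab) !big_pred1_eq.
Qed.

Lemma sig_even : (4 <= n)%N ->
  \sum_(u : {ffun 'I_n -> 'I_m} | Ae u) mon u -
  \sum_(u : {ffun 'I_n -> 'I_m} | Be u) mon u =
  (Dd m - Ee m) * ee m ^+ (n - 2).
Proof.
move=> n4.
have Ha : (n - 3 < n)%N by lia.
have Hb : (n - 2 < n)%N by lia.
have Hc : (n - 1 < n)%N by lia.
set a := Ordinal Ha; set b := Ordinal Hb; set c := Ordinal Hc.
have ab : a != b by rewrite -val_eqE /=; lia.
have ac : a != c by rewrite -val_eqE /=; lia.
have bc : b != c by rewrite -val_eqE /=; lia.
rewrite (eq_bigl (fun u : {ffun 'I_n -> 'I_m} => (u a <= u c)%N && (u b <= u c)%N)); last first.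
  by move=> u; rewrite /Ae -[(n - 3)%N]/(nat_of_ord a) -[(n - 2)%N]/(nat_of_ord b)
    -[(n - 1)%N]/(nat_of_ord c) !ua_ord.
rewrite [X in _ - X](eq_bigl (fun u : {ffun 'I_n -> 'I_m} => (u c < u a)%N && (u c < u b)%N)); last first.
  by move=> u; rewrite /Be -[(n - 3)%N]/(nat_of_ord a) -[(n - 2)%N]/(nat_of_ord b)
    -[(n - 1)%N]/(nat_of_ord c) !ua_ord.
rewrite (partition_big (fun u : {ffun 'I_n -> 'I_m} => u c) predT) //=.
rewrite [X in _ - X](partition_big (fun u : {ffun 'I_n -> 'I_m} => u c) predT) //=.
rewrite -sumrB /Dd /Ee -sumrB mulr_suml; apply: eq_bigr => z _.
rewrite (eq_bigl (fun u : {ffun 'I_n -> 'I_m} =>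
   [&& (fun i : 'I_m => (i <= z)%N) (u a), (fun i : 'I_m => (i <= z)%N) (u b)
     & pred1 z (u c)])); last first.
  move=> u /=; case: (eqVneq (u c) z) => [->|H]; rewrite ?andbT ?andbF //.
rewrite [X in _ - X](eq_bigl (fun u : {ffun 'I_n -> 'I_m} =>
   [&& (fun i : 'I_m => (z < i)%N) (u a), (fun i : 'I_m => (z < i)%N) (u b)
     & pred1 z (u c)])); last first.
  move=> u /=; case: (eqVneq (u c) z) => [->|H]; rewrite ?andbT ?andbF //.
rewrite (@sum_pos3 n m a b c (fun i : 'I_m => (i <= z)%N) (fun i : 'I_m => (i <= z)%N) (pred1 z) ab ac bc).
rewrite (@sum_pos3 n m a b c (fun i : 'I_m => (z < i)%N) (fun i : 'I_m => (z < i)%N) (pred1 z) ab ac bc).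
rewrite !big_pred1_eq -/(Sle z) -/(Sgt z).
have -> : ee m ^+ (n - 2) = ee m * ee m ^+ (n - 3).
  by rewrite -exprS; congr (_ ^+ _); lia.
set E3 := ee m ^+ (n - 3).
rewrite (ee_split z); ring.
Qed.

Lemma sig_two : n = 2%N ->
  \sum_(u : {ffun 'I_n -> 'I_m} | (ua u 0 <= ua u 1)%N) mon u -
  \sum_(u : {ffun 'I_n -> 'I_m} | (ua u 1 < ua u 0)%N) mon u =
  (Dd m - Ee m) * ee m ^+ (n - 2).
Proof.
move=> n2e.
have Ha : (0 < n)%N by lia.
have Hc : (1 < n)%N by lia.
set a := Ordinal Ha; set c := Ordinal Hc.
have ac : a != c by rewrite -val_eqE /=.
rewrite (eq_bigl (fun u : {ffun 'I_n -> 'I_m} => (u a <= u c)%N)); last first.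
  by move=> u; rewrite -[0%N]/(nat_of_ord a) -[1%N]/(nat_of_ord c) !ua_ord.
rewrite [X in _ - X](eq_bigl (fun u : {ffun 'I_n -> 'I_m} => (u c < u a)%N)); last first.
  by move=> u; rewrite -[0%N]/(nat_of_ord a) -[1%N]/(nat_of_ord c) !ua_ord.
rewrite (partition_big (fun u : {ffun 'I_n -> 'I_m} => u c) predT) //=.
rewrite [X in _ - X](partition_big (fun u : {ffun 'I_n -> 'I_m} => u c) predT) //=.
rewrite -sumrB /Dd /Ee -sumrB mulr_suml; apply: eq_bigr => z _.
rewrite (eq_bigl (fun u : {ffun 'I_n -> 'I_m} =>
   (fun i : 'I_m => (i <= z)%N) (u a) && pred1 z (u c))); last first.
  move=> u /=; case: (eqVneq (u c) z) => [->|H]; rewrite ?andbT ?andbF //.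
rewrite [X in _ - X](eq_bigl (fun u : {ffun 'I_n -> 'I_m} =>
   (fun i : 'I_m => (z < i)%N) (u a) && pred1 z (u c))); last first.
  move=> u /=; case: (eqVneq (u c) z) => [->|H]; rewrite ?andbT ?andbF //.
rewrite (@sum_pos2 n m a c (fun i : 'I_m => (i <= z)%N) (pred1 z) ac).
rewrite (@sum_pos2 n m a c (fun i : 'I_m => (z < i)%N) (pred1 z) ac).
rewrite !big_pred1_eq -/(Sle z) -/(Sgt z).
set E2 := ee m ^+ (n - 2); ring.
Qed.

End Sig.

Unset Implicit Arguments.
Set Strict Implicit.


Lemma sig_val (n m : nat) : (2 <= n)%N ->
  \sum_(u : {ffun 'I_n -> 'I_m} | ~~ movable u) sgnW u =
  (Dd m - Ee m) * ee m ^+ (n - 2).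
Proof.
move=> n2; case: (boolP (odd n)) => Hodd.
  by rewrite (@fix_odd n m n2 Hodd) sig_odd.
have [n2e|n4] : n = 2%N \/ (4 <= n)%N by move: n2 Hodd; lia.
  by rewrite (@fix2 n m n2e) sig_two.
by rewrite (@fix_even n m n4 Hodd) sig_even.
Qed.

Theorem proposition4p6 (n : nat) (hn : (2 <= n)%N) (m : nat) :
  \sum_(w : 'S_n | butler w) gesselF m n (iDes w)
  = hpart m (2%N :: nseq (n - 2) 1%N).
Proof.
rewrite (stepA m (@butler n)) hpart_val //.
apply: twice_inj; rewrite (@key_identity n m hn) sum_all sig_val //.
have -> : ee m ^+ n = ee m * ee m * ee m ^+ (n - 2).
  by rewrite -expr2 -exprD; congr (_ ^+ _); lia.
rewrite -DE_sum; set E2 := ee m ^+ (n - 2); ring.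
Qed.
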